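(* Let $(X,\tau)$ be an extended locally convex space with finest locally convex topology $\tau_F$, let $Y$ be a closed linear subspace of $(X,\tau)$, and let $\pi:X\to X/Y$, $\pi(x)=x+Y$, be the quotient map. Then the quotient topology $\pi(\tau_F)$ on $X/Y$ is the finest locally convex topology of the extended locally convex space $(X/Y,\pi(\tau))$. Moreover, $(X/Y,\pi(\tau))^*=(X/Y,\pi(\tau_F))^*$.
   Context: An extended seminorm on a vector space $X$ over $\mathbb{R}$ or $\mathbb{C}$ is a map $\rho:X\to[0,\infty]$ with $\rho(\alpha x)=|\alpha|\rho(x)$ and $\rho(x+y)\le\rho(x)+\rho(y)$. An extended locally convex space $(X,\tau)$ is a vector space with the topology induced by a family $\{\rho_i\}$ of extended seminorms (neighborhood base at $x_0$: $\{x:\max_{i\in J}\rho_i(x-x_0)<\varepsilon\}$, $J$ finite, $\varepsilon>0$). A locally convex topology is one induced in this way by finite-valued seminorms. The finest locally convex topology of an elcs $(X,\tau)$ is the locally convex topology $\tau_F\subseteq\tau$ such that every locally convex topology $\sigma\subseteq\tau$ on $X$ satisfies $\sigma\subseteq\tau_F$. For a topology $\eta$ on $X$, $\pi(\eta)$ denotes the quotient topology on $X/Y$ (the finest topology making $\pi$ continuous). $(Z,\sigma)^*$ denotes the set of $\sigma$-continuous linear functionals on $Z$. *)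

(* Defs.v *)
From mathcomp Require Import all_boot all_order all_algebra.
From mathcomp Require Import all_classical reals constructive_ereal complex.
Set Implicit Arguments. Unset Strict Implicit. Unset Printing Implicit Defensive.
Import Order.TTheory GRing.Theory Num.Theory.
Local Open Scope ring_scope.
Local Open Scope classical_set_scope.
Local Open Scope ereal_scope.

Definition RorC (R : realType) (b : bool) : numFieldType :=
  if b then (R[i] : numFieldType) else (R : numFieldType).

Section Defs.
Context {K : numFieldType}.

(* extended seminorm  rho : X -> [0, +oo] ; the convention 0 * +oo = 0 is
   the one of mathcomp's extended reals *)
Definition ext_seminorm {X : lmodType K} (rho : X -> \bar K) : Prop :=
  [/\ (forall x, 0 <= rho x),
      (forall (a : K) x, rho (a *: x) = (`|a|)%:E * rho x)
    & (forall x y, rho (x + y)%R <= rho x + rho y)].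

Definition fin_seminorm {X : lmodType K} (rho : X -> \bar K) : Prop :=
  ext_seminorm rho /\ (forall x, rho x < +oo).

Definition induced_top {X : lmodType K} {I : Type} (rho : I -> X -> \bar K)
  : set (set X) :=
  [set U | forall x0, U x0 -> exists (J : set I) (e : K),
      [/\ finite_set J, (0 < e)%R &
          [set x | forall i, J i -> rho i (x - x0)%R < e%:E] `<=` U]].

Definition is_elcs_top {X : lmodType K} (tau : set (set X)) : Prop :=
  exists (I : Type) (rho : I -> X -> \bar K),
    (forall i, ext_seminorm (rho i)) /\ tau = induced_top rho.

Definition is_lc_top {X : lmodType K} (tau : set (set X)) : Prop :=
  exists (I : Type) (rho : I -> X -> \bar K),
    (forall i, fin_seminorm (rho i)) /\ tau = induced_top rho.

Definition is_finest_lc {X : lmodType K} (tau sigma : set (set X)) : Prop :=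
  [/\ is_lc_top sigma, sigma `<=` tau &
      forall sigma', is_lc_top sigma' -> sigma' `<=` tau -> sigma' `<=` sigma].

Definition quotient_top {X Q : lmodType K} (pi : X -> Q) (tau : set (set X))
  : set (set Q) := [set V | tau (pi @^-1` V)].

Definition closed_in {X : Type} (tau : set (set X)) (A : set X) : Prop :=
  tau (~` A).

Definition linear_subspace {X : lmodType K} (Y : set X) : Prop :=
  Y 0%R /\ (forall (a : K) x y, Y x -> Y y -> Y (a *: x + y)%R).

Definition is_linear_map {X Q : lmodType K} (f : X -> Q) : Prop :=
  forall (a : K) x y, f (a *: x + y)%R = (a *: f x + f y)%R.

Definition is_linear_functional {Q : lmodType K} (f : Q -> K) : Prop :=
  forall (a : K) x y, f (a *: x + y)%R = (a * f x + f y)%R.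

Definition continuous_wrt {Q : Type} (sigma : set (set Q)) (f : Q -> K) : Prop :=
  forall x0 (e : K), (0 < e)%R ->
    exists U, [/\ sigma U, U x0 & forall x, U x -> (`|f x - f x0| < e)%R].

Definition top_dual {Q : lmodType K} (sigma : set (set Q)) : set (Q -> K) :=
  [set f | is_linear_functional f /\ continuous_wrt sigma f].

End Defs.

(* Main.v *)
Require Import Defs.
From mathcomp Require Import all_boot all_order all_algebra.
From mathcomp Require Import all_classical reals constructive_ereal complex.
From mathcomp Require Import ereal.
From mathcomp Require Import lra.
Import Order.TTheory GRing.Theory Num.Theory.
Set Implicit Arguments. Unset Strict Implicit. Unset Printing Implicit Defensive.
Local Open Scope ring_scope.
Local Open Scope classical_set_scope.

Fixpoint memL {T : Type} (x : T) (s : seq T) : Prop :=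
  match s with [::] => False | a :: s => a = x \/ memL x s end.
Lemma in_memL {T : eqType} (x : T) s : x \in s <-> memL x s.
Proof. elim: s => [|a s IH] //=; rewrite in_cons; split.
  by case/orP => [/eqP ->|/IH]; [left|right].
  by case=> [->|/IH ->]; rewrite ?eqxx ?orbT.
Qed.
Lemma finite_list {T : Type} (A : set T) :
  finite_set A -> exists L : seq T, forall x, A x <-> memL x L.
Proof. elim/Pchoice: T => T in A *. move/finite_seqP => [s ->]. exists s => x. exact: in_memL. Qed.
Lemma finite_memL {T : Type} (L : seq T) : finite_set [set x | memL x L].
Proof.
elim: L => [|a L IH].
  by rewrite (_ : [set x | memL x [::]] = set0); [exact: finite_set0|apply/seteqP; split].
rewrite (_ : [set x | memL x (a :: L)] = [set a] `|` [set x | memL x L]).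
  by rewrite finite_setU; split => //; exact: finite_set1.
by apply/seteqP; split => x /=; case=> [->|h]; by [left|right].
Qed.
Lemma memL_flatten {T : Type} (x : T) (L : seq T) LL :
  memL L LL -> memL x L -> memL x (flatten LL).
Proof.
elim: LL => [|L' LL IH] //= [->|h] hx.
  elim: L hx {IH} => [|a L IHL] //= [->|h']; [by left|by right; apply: IHL].
elim: L' => [|a L' IHL] //=; first exact: IH.
by right; exact: IHL.
Qed.

Section Transfer.
Local Open Scope ereal_scope.
Variables (K : numFieldType) (R : realType) (re : K -> R) (emb : R -> K).
Hypotheses (reK : forall r, re (emb r) = r)
  (embK : forall z, (0 <= z)%R -> emb (re z) = z)
  (emb_le : forall r s, (emb r <= emb s)%R = (r <= s)%R)
  (emb_lt : forall r s, (emb r < emb s)%R = (r < s)%R)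
  (embD : forall r s, emb (r + s)%R = (emb r + emb s)%R)
  (embM : forall r s, emb (r * s)%R = (emb r * emb s)%R)
  (emb1 : emb 1 = 1%R).

Lemma emb0 : emb 0 = 0%R.
Proof. by apply/(@addrI _ (emb 0)); rewrite -embD !addr0. Qed.
Lemma re0 : re 0 = 0%R.
Proof. by rewrite -emb0 reK. Qed.
Lemma re_ge0 z : (0 <= z)%R -> (0 <= re z)%R.
Proof. by move=> z0; rewrite -emb_le emb0 embK. Qed.
Lemma re_lt z w : (0 <= z)%R -> (0 <= w)%R -> (re z < re w)%R = (z < w)%R.
Proof. by move=> z0 w0; rewrite -emb_lt !embK. Qed.
Lemma re_le z w : (0 <= z)%R -> (0 <= w)%R -> (re z <= re w)%R = (z <= w)%R.
Proof. by move=> z0 w0; rewrite -emb_le !embK. Qed.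
Lemma re_gt0 z : (0 < z)%R -> (0 < re z)%R.
Proof. by move=> z0; rewrite -re0 re_lt // ltW. Qed.
Lemma reD z w : (0 <= z)%R -> (0 <= w)%R -> re (z + w) = (re z + re w)%R.
Proof. by move=> z0 w0; rewrite -{1}(embK z0) -{1}(embK w0) -embD reK. Qed.
Lemma reM z w : (0 <= z)%R -> (0 <= w)%R -> re (z * w) = (re z * re w)%R.
Proof. by move=> z0 w0; rewrite -{1}(embK z0) -{1}(embK w0) -embM reK. Qed.
Lemma emb_ge0 r : (0 <= emb r)%R = (0 <= r)%R.
Proof. by rewrite -emb0 emb_le. Qed.

Definition nrm (a : K) : R := re (`|a|)%R.
Lemma nrm_ge0 a : (0 <= nrm a)%R. Proof. exact: re_ge0. Qed.
Lemma nrm_gt0 a : a != 0%R -> (0 < nrm a)%R.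
Proof. by move=> a0; apply: re_gt0; rewrite normr_gt0. Qed.
Lemma nrm0 : nrm 0 = 0%R. Proof. by rewrite /nrm normr0 re0. Qed.
Lemma emb_nrm a : emb (nrm a) = (`|a|)%R. Proof. exact: embK. Qed.

Definition er (y : \bar K) : \bar R :=
  match y with r%:E => (re r)%:E | +oo => +oo | -oo => -oo end.
Definition ee (y : \bar R) : \bar K :=
  match y with r%:E => (emb r)%:E | +oo => +oo | -oo => -oo end.

Lemma er_ge0 y : 0 <= y -> 0 <= er y.
Proof. by case: y => [r||] //=; rewrite !lee_fin; apply: re_ge0. Qed.
Lemma ee_ge0 y : 0 <= y -> 0 <= ee y.
Proof. by case: y => [r||] //=; rewrite !lee_fin emb_ge0. Qed.

Lemma er_lt y (e : K) : 0 <= y -> (0 < e)%R -> (y < e%:E) = (er y < (re e)%:E).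
Proof.
case: y => [r||] //= r0 e0.
by rewrite lee_fin in r0; rewrite !lte_fin re_lt // ltW.
Qed.
Lemma ee_lt y (e : K) : 0 <= y -> (0 < e)%R -> (ee y < e%:E) = (y < (re e)%:E).
Proof.
case: y => [r||] //= r0 e0.
by rewrite lee_fin in r0; rewrite !lte_fin -emb_lt embK // ltW.
Qed.
Lemma er_le y w : 0 <= y -> 0 <= w -> y <= w -> er y <= er w.
Proof.
case: y => [r||] //; case: w => [s||] //= r0 s0; rewrite ?leey //.
by rewrite !lee_fin re_le.
Qed.
Lemma emb_real r : (0 <= r)%R -> (emb r)%:E <= +oo.
Proof. by move=> r0; rewrite /Order.le /= ger0_real // emb_ge0. Qed.
Lemma emb_realt r : (0 <= r)%R -> (emb r)%:E < +oo.
Proof. by move=> r0; rewrite /Order.lt /= ger0_real // emb_ge0. Qed.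
Lemma ee_le y w : 0 <= y -> 0 <= w -> y <= w -> ee y <= ee w.
Proof.
case: y => [r||]; case: w => [s||] //= y0 w0 h.
- by rewrite lee_fin emb_le; rewrite lee_fin in h.
- by apply: emb_real; rewrite -lee_fin.
Qed.
Lemma ee_lty y : 0 <= y -> y < +oo -> ee y < +oo.
Proof. by case: y => [r||] //= y0 _; apply: emb_realt; rewrite -lee_fin. Qed.
Lemma erD y w : 0 <= y -> 0 <= w -> er (y + w) = er y + er w.
Proof.
case: y => [r||]; case: w => [s||] // r0 s0; rewrite /adde /= //.
by rewrite reD // -lee_fin.
Qed.
Lemma eeD y w : ee (y + w) = ee y + ee w.
Proof.
by case: y => [r||]; case: w => [s||] //; rewrite /adde /= ?embD.
Qed.
Lemma erM a y : 0 <= y -> er ((`|a|)%R%:E * y) = (nrm a)%:E * er y.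
Proof.
case: y => [r||] // r0.
  by rewrite /mule /= reM ?normr_ge0 // -lee_fin.
have [->|a0] := eqVneq a 0%R; first by rewrite normr0 nrm0 !mul0e /= re0.
rewrite gt0_muley ?lte_fin ?nrm_gt0 //.
by rewrite /mule /= eqe normr_eq0 (negPf a0) lte_fin normr_gt0 a0.
Qed.
Lemma eeM a y : 0 <= y -> ee ((nrm a)%:E * y) = (`|a|)%R%:E * ee y.
Proof.
case: y => [r||] // _; first by rewrite /mule /= embM emb_nrm.
have [->|a0] := eqVneq a 0%R; first by rewrite normr0 nrm0 !mul0e /= emb0.
rewrite gt0_muley ?lte_fin ?nrm_gt0 //.
by rewrite /mule /= eqe normr_eq0 (negPf a0) lte_fin normr_gt0 a0.
Qed.

Lemma er_lty y : 0 <= y -> y < +oo -> er y < +oo.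
Proof. by case: y => [r||] //= _ _; exact: ltry. Qed.

Lemma fin_lty (r : K) : (0 <= r)%R -> r%:E < +oo.
Proof. by move=> r0; rewrite /Order.lt /= ger0_real. Qed.

Definition rsn {X : lmodType K} (p : X -> \bar R) :=
  [/\ forall x, 0 <= p x, forall a x, p (a *: x) = (nrm a)%:E * p x
    & forall x y, p (x + y)%R <= p x + p y].

Definition itopR {X : lmodType K} {Ix : Type} (rho : Ix -> X -> \bar R)
  : set (set X) :=
  [set U | forall x0, U x0 -> exists (J : set Ix) (e : R),
      [/\ finite_set J, (0 < e)%R &
          [set x | forall i, J i -> rho i (x - x0)%R < e%:E] `<=` U]].

Lemma rsn_er (X : lmodType K) (p : X -> \bar K) :
  ext_seminorm p -> rsn (fun x => er (p x)).
Proof.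
case=> p0 pZ pD; split.
- by move=> x; exact: er_ge0.
- by move=> a x; rewrite pZ erM.
- move=> x y; rewrite -erD //; apply: er_le => //; exact: adde_ge0.
Qed.

Lemma esn_ee (X : lmodType K) (p : X -> \bar R) :
  rsn p -> ext_seminorm (fun x => ee (p x)).
Proof.
case=> p0 pZ pD; split.
- by move=> x; exact: ee_ge0.
- by move=> a x; rewrite pZ eeM.
- move=> x y; rewrite -eeD //; apply: ee_le => //; exact: adde_ge0.
Qed.

Lemma itop_er (X : lmodType K) (Ix : Type) (rho : Ix -> X -> \bar K) :
  (forall i x, 0 <= rho i x) ->
  induced_top rho = itopR (fun i x => er (rho i x)).
Proof.
move=> r0; apply/seteqP; split => U HU x0 Ux0.
- have [J [e [fJ e0 sub]]] := HU x0 Ux0.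
  exists J, (re e); split => //; first exact: re_gt0.
  by move=> x /= Hx; apply: sub => i Ji /=; rewrite er_lt //; exact: Hx.
- have [J [e [fJ e0 sub]]] := HU x0 Ux0.
  have e0' : (0 < emb e)%R by rewrite -emb0 emb_lt.
  exists J, (emb e); split => //.
  by move=> x /= Hx; apply: sub => i Ji /=; have := Hx i Ji; rewrite er_lt // reK.
Qed.

Lemma itop_ee (X : lmodType K) (Ix : Type) (rho : Ix -> X -> \bar R) :
  (forall i x, 0 <= rho i x) ->
  induced_top (fun i x => ee (rho i x)) = itopR rho.
Proof.
move=> r0; apply/seteqP; split => U HU x0 Ux0.
- have [J [e [fJ e0 sub]]] := HU x0 Ux0.
  exists J, (re e); split => //; first exact: re_gt0.
  by move=> x /= Hx; apply: sub => i Ji /=; rewrite ee_lt //; exact: Hx.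
- have [J [e [fJ e0 sub]]] := HU x0 Ux0.
  have e0' : (0 < emb e)%R by rewrite -emb0 emb_lt.
  exists J, (emb e); split => //.
  by move=> x /= Hx; apply: sub => i Ji /=; have := Hx i Ji; rewrite ee_lt // reK.
Qed.

Section Mx.
Variables (V : lmodType K) (Ix : Type) (rho : Ix -> V -> \bar R).
Hypothesis Hrho : forall i, rsn (rho i).

Definition mx (L : seq Ix) (x : V) : \bar R :=
  foldr (fun i m => maxe (rho i x) m) 0 L.

Lemma mx_ge0 L x : 0 <= mx L x.
Proof. by elim: L => [|i L IH] //=; rewrite le_max IH orbT. Qed.

Lemma mx_lt L x (e : R) :
  mx L x < e%:E <-> (0 < e)%R /\ forall i, memL i L -> rho i x < e%:E.
Proof.
elim: L => [|a L IH] /=; first by split => [h|[]//]; split; rewrite -?lte_fin.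
rewrite gt_max; split.
  case/andP => h1 /IH [e0 h2]; split => // i [<-|/h2] //.
case=> e0 h; apply/andP; split; first by apply: h; left.
by apply/IH; split => // i hi; apply: h; right.
Qed.

Lemma mx_ub L x i : memL i L -> rho i x <= mx L x.
Proof.
elim: L => [|a L IH] //= [->|h]; rewrite le_max ?lexx //.
by rewrite IH ?orbT.
Qed.

Lemma rho0 i : rho i 0%R = 0.
Proof. by case: (Hrho i) => _ hZ _; rewrite -(scale0r 0%R) hZ nrm0 mul0e. Qed.

Lemma mx0 L : mx L 0%R = 0.
Proof. by elim: L => [|a L IH] //=; rewrite IH rho0 maxxx. Qed.

Lemma mxZ L a x : mx L (a *: x) = (nrm a)%:E * mx L x.
Proof.
elim: L => [|i L IH] /=; first by rewrite mule0.
by case: (Hrho i) => _ hZ _; rewrite hZ IH maxe_pMr // lee_fin nrm_ge0.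
Qed.

Lemma mxD L x y : mx L (x + y)%R <= mx L x + mx L y.
Proof.
elim: L => [|i L IH] /=; first by rewrite adde0.
case: (Hrho i) => _ _ hD; rewrite ge_max; apply/andP; split.
  by apply: (le_trans (hD x y)); apply: leeD; rewrite le_max lexx.
by apply: (le_trans IH); apply: leeD; rewrite le_max lexx orbT.
Qed.

Lemma mx_fin L x : (forall i, rho i x < +oo) -> mx L x < +oo.
Proof. by move=> h; elim: L => [|i L IH] //=; rewrite gt_max h IH. Qed.

Lemma ball_open L q0 (e : R) :
  itopR rho [set q | mx L (q - q0)%R < e%:E].
Proof.
move=> q1 /= h1.
have d0 := mx_ge0 L (q1 - q0)%R.
have df : mx L (q1 - q0)%R \is a fin_num.
  by rewrite ge0_fin_numE //; apply: lt_trans h1 _; exact: ltry.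
set d := fine (mx L (q1 - q0)%R).
have hd : (mx L (q1 - q0)%R) = d%:E by rewrite fineK.
have dlt : (d < e)%R by rewrite -lte_fin -hd.
exists [set i | memL i L], (e - d)%R; split.
- exact: finite_memL.
- by rewrite subr_gt0.
- move=> q /= hq.
  have h2 : mx L (q - q1)%R < (e - d)%:E.
    by apply/mx_lt; split => //; rewrite subr_gt0.
  have -> : (q - q0 = (q - q1) + (q1 - q0))%R by rewrite addrA subrK.
  apply: le_lt_trans (mxD _ _ _) _.
  apply: (@lt_le_trans _ _ ((e - d)%:E + d%:E)).
    by rewrite hd; apply: lte_leD.
  by rewrite -EFinD subrK.
Qed.
End Mx.

Section Quot.
Variables (X Q : lmodType K) (pi : X -> Q).
Hypotheses (Hlin : is_linear_map pi) (Hsurj : forall q : Q, exists x, pi x = q).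
Variables (Ix : Type) (rho : Ix -> X -> \bar R).
Hypothesis Hrho : forall i, rsn (rho i).

Lemma piD x y : pi (x + y)%R = (pi x + pi y)%R.
Proof. have := Hlin 1%R x y. by rewrite !scale1r. Qed.
Lemma pi0 : pi 0%R = 0%R.
Proof. by apply/(@addrI _ (pi 0%R)); rewrite -piD !addr0. Qed.
Lemma piZ a x : pi (a *: x) = (a *: pi x)%R.
Proof. by rewrite -(addr0 (a *: x)) Hlin pi0 addr0. Qed.
Lemma piB x y : pi (x - y)%R = (pi x - pi y)%R.
Proof. by rewrite -scaleN1r piD piZ scaleN1r. Qed.

Definition qsn (L : seq Ix) (q : Q) : \bar R :=
  ereal_inf [set mx rho L x | x in [set x | pi x = q]].

Lemma qsn_le L x : qsn L (pi x) <= mx rho L x.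
Proof. by apply: ereal_inf_lbound; exists x. Qed.

Lemma qsn_lt L q y : qsn L q < y -> exists x, pi x = q /\ mx rho L x < y.
Proof. by case/ereal_inf_lt => _ [x px <-] h; exists x. Qed.

Lemma qsn_ge0 L q : 0 <= qsn L q.
Proof. by apply: le_ereal_inf_tmp => _ [x _ <-]; exact: mx_ge0. Qed.

Lemma qsn0 L : qsn L 0%R = 0.
Proof.
apply/eqP; rewrite eq_le qsn_ge0 andbT.
by rewrite -pi0; apply: le_trans (qsn_le _ _) _; rewrite mx0.
Qed.

Lemma qsnZ_le L a q : a != 0%R -> qsn L (a *: q) <= (nrm a)%:E * qsn L q.
Proof.
move=> a0; rewrite -ereal_inf_pZl ?nrm_gt0 //.
apply: le_ereal_inf_tmp => _ [_ [x px <-] <-].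
by apply: ereal_inf_lbound; exists (a *: x); [rewrite /= piZ px|rewrite mxZ].
Qed.

Lemma nrmV a : a != 0%R -> (nrm a * nrm a^-1)%R = 1%R.
Proof.
move=> a0; rewrite /nrm -reM ?normr_ge0 // -normrM mulfV // normr1.
by rewrite -emb1 reK.
Qed.

Lemma qsnZ L a q : qsn L (a *: q) = (nrm a)%:E * qsn L q.
Proof.
have [->|a0] := eqVneq a 0%R; first by rewrite scale0r qsn0 nrm0 mul0e.
apply/eqP; rewrite eq_le qsnZ_le //=.
have h : qsn L q <= (nrm a^-1)%:E * qsn L (a *: q).
  by rewrite -{1}(scalerK a0 q) qsnZ_le // invr_eq0.
apply: le_trans (lee_wpmul2l _ h) _; first by rewrite lee_fin nrm_ge0.
by rewrite muleA -EFinM nrmV // mul1e.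
Qed.

Lemma qsnD L q1 q2 : qsn L (q1 + q2)%R <= qsn L q1 + qsn L q2.
Proof.
have g1 := qsn_ge0 L q1; have g2 := qsn_ge0 L q2.
case E1 : (qsn L q1) g1 => [r1||] // g1; last first.
  by case: (qsn L q2) g2 => [r2||] // _; rewrite addye // leey.
case E2 : (qsn L q2) g2 => [r2||] // g2; last by rewrite addey // leey.
apply/lee_addgt0Pr => e e0.
have e20 : (0 < e / 2)%R by rewrite divr_gt0.
have [x1 [px1 h1]] : exists x, pi x = q1 /\ mx rho L x < (r1 + e / 2)%:E.
  by apply: qsn_lt; rewrite E1 lte_fin ltrDl.
have [x2 [px2 h2]] : exists x, pi x = q2 /\ mx rho L x < (r2 + e / 2)%:E.
  by apply: qsn_lt; rewrite E2 lte_fin ltrDl.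
rewrite -px1 -px2 -piD; apply: le_trans (qsn_le _ _) _.
apply: le_trans (mxD Hrho _ _ _) _.
apply: le_trans (leeD (ltW h1) (ltW h2)) _.
by rewrite -!EFinD lee_fin; lra.
Qed.

Lemma rsn_qsn L : rsn (qsn L).
Proof. split; [exact: qsn_ge0|exact: qsnZ|exact: qsnD]. Qed.

Lemma qsn_fin L q : (forall i x, rho i x < +oo) -> qsn L q < +oo.
Proof.
move=> h; have [x <-] := Hsurj q.
by apply: le_lt_trans (qsn_le _ _) _; apply: mx_fin.
Qed.

Lemma quot_itop : quotient_top pi (itopR rho) = itopR qsn.
Proof.
apply/seteqP; split => W HW.
- move=> q0 Wq0; have [x0 px0] := Hsurj q0.
  have Hx0 : (pi @^-1` W) x0 by rewrite /preimage /= px0.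
  have [J [e [fJ e0 sub]]] := HW x0 Hx0.
  have [L HL] := finite_list fJ.
  exists [set L], e; split => //; try exact: finite_set1.
  move=> q /= Hq; have [x [px mxlt]] := qsn_lt (Hq L erefl).
  have <- : pi (x0 + x)%R = q by rewrite piD px0 px addrC subrK.
  apply: sub => i /HL Ji /=; rewrite addrAC subrr add0r.
  by case/mx_lt: mxlt => _; apply.
- move=> x0 /= Wx0; have [JJ [e [fJJ e0 sub]]] := HW (pi x0) Wx0.
  have [LL HLL] := finite_list fJJ.
  exists [set i | memL i (flatten LL)], e; split => //; first exact: finite_memL.
  move=> x /= Hx; rewrite /preimage /=; apply: sub => L /HLL HL /=.
  rewrite -piB; apply: le_lt_trans (qsn_le _ _) _.
  apply/mx_lt; split => // i Hi; apply: Hx; exact: memL_flatten HL Hi.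
Qed.
End Quot.

Lemma fB (Q : lmodType K) (f : Q -> K) : is_linear_functional f ->
  forall q q0, f (q - q0)%R = (f q - f q0)%R.
Proof.
move=> fl q q0; have := fl (-1)%R q0 q.
by rewrite scaleN1r mulN1r addrC => ->; rewrite addrC.
Qed.

Theorem main_gen (X : lmodType K) (tau tauF : set (set X))
  (Htau : is_elcs_top tau) (HtauF : is_finest_lc tau tauF)
  (Q : lmodType K) (pi : X -> Q)
  (Hpi_lin : is_linear_map pi) (Hpi_surj : forall q : Q, exists x, pi x = q) :
  [/\ is_elcs_top (quotient_top pi tau),
      is_finest_lc (quotient_top pi tau) (quotient_top pi tauF) &
      top_dual (quotient_top pi tau) = top_dual (quotient_top pi tauF)].
Proof.
case: Htau => Ix [rho [Hrho Htau]]; subst tau.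
case: HtauF => [[IF [rhoF [HrhoF HtF]]] subF finF].
have r0 : forall i x, 0 <= rho i x by move=> i x; case: (Hrho i).
have HrR : forall i, rsn (fun x => er (rho i x)) by move=> i; exact: rsn_er.
have E1 : induced_top rho = itopR (fun i x => er (rho i x)) by exact: itop_er.
have Q1 : quotient_top pi (induced_top rho) =
    induced_top (fun L q => ee (qsn pi (fun i x => er (rho i x)) L q)).
  rewrite E1 (quot_itop Hpi_lin Hpi_surj _) itop_ee //.
  by move=> L q; exact: qsn_ge0.
have key : forall sigma', is_lc_top sigma' ->
    sigma' `<=` quotient_top pi (induced_top rho) ->
    sigma' `<=` quotient_top pi tauF.
  move=> s' [I2 [p [Hp ->]]] Hs'.
  have p0 : forall i q, 0 <= p i q by move=> i q; case: (Hp i) => [[]].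
  have HpR : forall i, rsn (fun q => er (p i q)) by move=> i; apply: rsn_er; case: (Hp i).
  pose pX := fun i x => p i (pi x).
  have HpX : forall i, fin_seminorm (pX i).
    move=> i; case: (Hp i) => [[h0 hZ hD] hf]; split; first split.
    - by move=> x; exact: h0.
    - by move=> a x; rewrite /pX piZ // hZ.
    - by move=> x y; rewrite /pX piD //.
    - by move=> x; exact: hf.
  have subX : induced_top pX `<=` induced_top rho.
    rewrite (itop_er (rho := pX)) ?E1; last by move=> i x; exact: p0.
    move=> U HU x0 Ux0.
    have [J [e [fJ e0 sub]]] := HU x0 Ux0.
    have [L HL] := finite_list fJ.
    pose B := [set q | mx (fun i q => er (p i q)) L (q - pi x0)%R < e%:E].
    have HB : induced_top p B by rewrite itop_er //; exact: ball_open.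
    have := Hs' B HB; rewrite /quotient_top /= E1 => HpB.
    have HBx0 : (pi @^-1` B) x0.
      by rewrite /preimage /B /= subrr mx0 ?lte_fin.
    have [J2 [e2 [fJ2 e20 sub2]]] := HpB x0 HBx0.
    exists J2, e2; split => // x Hx; apply: sub => i Ji.
    have := sub2 x Hx; rewrite /preimage /B /= => /mx_lt [_ H].
    by rewrite /pX piB //; apply: H; apply/HL.
  have lcX : is_lc_top (induced_top pX) by exists I2, pX.
  have HX := finF _ lcX (fun U hU => subX U hU).
  move=> W HW; apply: HX.
  move: HW; rewrite /quotient_top /= (itop_er (rho := pX)); last by move=> i x; exact: p0.
  rewrite itop_er // => HW x0 Wx0.
  have [J [e [fJ e0 sub]]] := HW (pi x0) Wx0.
  exists J, e; split => // x Hx; apply: sub => i Ji /=.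
  by have := Hx i Ji; rewrite /pX /= piB.
split.
- exists (seq Ix), (fun L q => ee (qsn pi (fun i x => er (rho i x)) L q)); split => //.
  by move=> L; apply: esn_ee; apply: rsn_qsn.
- split.
  + move: HtF => ->.
    have rF0 : forall i x, 0 <= rhoF i x by move=> i x; case: (HrhoF i) => [[]].
    have HrF : forall i, rsn (fun x => er (rhoF i x)).
      by move=> i; apply: rsn_er; case: (HrhoF i).
    exists (seq IF), (fun L q => ee (qsn pi (fun i x => er (rhoF i x)) L q)).
    split.
      move=> L; split; first by apply: esn_ee; apply: rsn_qsn.
      move=> q; apply: ee_lty; first exact: qsn_ge0.
      apply: qsn_fin => // i x; apply: er_lty; first exact: rF0.
      by case: (HrhoF i).
    rewrite (itop_er (rho := rhoF)) // (quot_itop Hpi_lin Hpi_surj _) itop_ee //.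
    by move=> L q; exact: qsn_ge0.
  + by move=> V; apply: subF.
  + by move=> s' hs' hsub; apply: key.
- apply/seteqP; split => f [fl fc]; split => //.
  + pose pf := fun (_ : unit) (q : Q) => (`|f q|)%R%:E.
    have Hpf : forall i, fin_seminorm (pf i).
      move=> i; split; first split.
      * by move=> q; rewrite /pf lee_fin normr_ge0.
      * move=> a q; rewrite /pf (_ : f (a *: q) = a * f q)%R ?normrM //.
        have f0 : f 0%R = 0%R by have := fB fl 0%R 0%R; rewrite subrr => ->; rewrite subrr.
        by have := fl a q 0%R; rewrite !addr0 f0 addr0.
      * move=> x y; rewrite /pf lee_fin.
        have -> : f (x + y)%R = (f x + f y)%R by have := fl 1%R x y; rewrite scale1r mul1r.
        exact: ler_normD.
      * by move=> q; apply: fin_lty.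
    have lcf : is_lc_top (induced_top pf) by exists unit, pf.
    have subf : induced_top pf `<=` quotient_top pi (induced_top rho).
      move=> W HW x0 Wx0.
      have [J [e [fJ e0 sub]]] := HW (pi x0) Wx0.
      have [U [HU Ux0 Hf]] := fc (pi x0) e e0.
      have [J2 [e2 [fJ2 e20 sub2]]] := HU x0 Ux0.
      exists J2, e2; split => // x Hx; apply: sub => i _ /=.
      by rewrite /pf lte_fin (fB fl); exact: Hf (sub2 x Hx).
    have Hs := key _ lcf subf.
    move=> q0 e e0; exists [set q | `|f q - f q0| < e]%R; split => //=.
    * apply: Hs => q1 /= h1.
      exists setT, (e - `|f q1 - f q0|)%R; split; first exact: finite_finset.
        by rewrite subr_gt0.
      move=> q /= /(_ tt Logic.I); rewrite /pf lte_fin (fB fl) => h.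
      apply: le_lt_trans (ler_distD (f q1) _ _) _.
      by rewrite -(subrK `|f q1 - f q0| e)%R ltr_leD.
    * by rewrite subrr normr0.
  + move=> q0 e e0; have [U [HU Uq0 Hf]] := fc q0 e e0.
    by exists U; split => //; apply: subF.
Qed.
End Transfer.

Section CInst.
Variable R : realType.
Local Open Scope complex_scope.
Let K := RorC R true.
Let re : K -> R := @complex.Re R.
Let emb : R -> K := fun r => r%:C.
Lemma c1 : forall r, re (emb r) = r. Proof. by []. Qed.
Lemma c2 : forall z : K, (0 <= z)%R -> emb (re z) = z.
Proof. case=> a b; rewrite lecE /= => /andP[/eqP -> _]; by []. Qed.
Lemma c3 r s : (emb r <= emb s)%R = (r <= s)%R. Proof. exact: lecR. Qed.
Lemma c4 r s : (emb r < emb s)%R = (r < s)%R. Proof. exact: ltcR. Qed.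
Lemma c5 r s : emb (r + s)%R = (emb r + emb s)%R. Proof. exact: rmorphD. Qed.
Lemma c6 r s : emb (r * s)%R = (emb r * emb s)%R. Proof. exact: rmorphM. Qed.
Lemma c7 : emb 1 = 1%R. Proof. exact: rmorph1. Qed.
End CInst.

Section RInst.
Variable R : realType.
Let K := RorC R false.
Lemma d1 : forall r : R, (id : K -> R) ((id : R -> K) r) = r. Proof. by []. Qed.
Lemma d2 : forall z : K, (0 <= z)%R -> (id : R -> K) ((id : K -> R) z) = z. Proof. by []. Qed.
Lemma d3 r s : ((id : R -> K) r <= (id : R -> K) s)%R = (r <= s)%R. Proof. by []. Qed.
Lemma d4 r s : ((id : R -> K) r < (id : R -> K) s)%R = (r < s)%R. Proof. by []. Qed.
Lemma d5 r s : (id : R -> K) (r + s)%R = ((id : R -> K) r + (id : R -> K) s)%R. Proof. by []. Qed.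
Lemma d6 r s : (id : R -> K) (r * s)%R = ((id : R -> K) r * (id : R -> K) s)%R. Proof. by []. Qed.
Lemma d7 : (id : R -> K) 1 = 1%R. Proof. by []. Qed.
End RInst.

Unset Implicit Arguments.

Theorem theorem4p3 (R : realType) (b : bool)
  (X : lmodType (RorC R b)) (tau tauF : set (set X))
  (Htau : is_elcs_top tau) (HtauF : is_finest_lc tau tauF)
  (Y : set X) (HY : linear_subspace Y) (HYc : closed_in tau Y)
  (Q : lmodType (RorC R b)) (pi : X -> Q)
  (Hpi_lin : is_linear_map pi) (Hpi_surj : forall q : Q, exists x, pi x = q)
  (Hpi_ker : forall x, pi x = 0 <-> Y x) :
  [/\ is_elcs_top (quotient_top pi tau),
      is_finest_lc (quotient_top pi tau) (quotient_top pi tauF) &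
      top_dual (quotient_top pi tau) = top_dual (quotient_top pi tauF)].
Proof.
move: X tau tauF Htau HtauF Y HY HYc Q pi Hpi_lin Hpi_surj Hpi_ker.
case: b => X tau tauF Htau HtauF _ _ _ Q pi Hl Hs _.
- exact: (main_gen (@c1 R) (@c2 R) (@c3 R) (@c4 R) (@c5 R) (@c6 R) (@c7 R)
    Htau HtauF Hl Hs).
- exact: (main_gen (@d1 R) (@d2 R) (@d3 R) (@d4 R) (@d5 R) (@d6 R) (@d7 R)
    Htau HtauF Hl Hs).
Qed.
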